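(* Let $k\ge 2$ be an integer that is not a perfect square, and let $R_k\subseteq\{0,1,\dots,k-1\}$ be the set of remainders modulo $k$ of the indices $\xi$ of solutions of $T_\xi=kT_t$ (as defined in the context), with $\upsilon=|R_k|$. Then: (i) $0\in R_k$ and $k-1\in R_k$; (ii) for every $\mu\in R_k$ one also has $k-1-\mu\in R_k$, so that the remainders come in pairs $\{\mu,\,k-1-\mu\}$ whose sum is $k-1$; (iii) $\upsilon$ is even; (iv) $\sum_{\mu\in R_k}\mu=(k-1)\,\upsilon/2$.
   Context: For an integer $m\ge 0$, $T_m=m(m+1)/2$ denotes the $m$-th triangular number. For a non-square integer $k\ge 2$, consider the equation $T_\xi=k\,T_t$ in nonnegative integers $t,\xi$. Let $R_k=\{\xi \bmod k : \exists\, t\ge 0 \text{ with } T_\xi=kT_t\}$, the set of least nonnegative remainders modulo $k$ of all $\xi$ occurring in solutions $(t,\xi)$, and $\upsilon=|R_k|$. *)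

(* Defs.v *)
From mathcomp Require Import all_boot all_order.
From mathcomp Require Import boolp.
Set Implicit Arguments. Unset Strict Implicit. Unset Printing Implicit Defensive.

Definition tri (m : nat) : nat := (m * m.+1) %/ 2.

Definition sol_index (k xi : nat) : Prop := exists t : nat, tri xi = k * tri t.

Definition Rk (k : nat) : {set 'I_k} :=
  [set r : 'I_k | `[< exists xi : nat, sol_index k xi /\ xi %% k = r >]].

Definition is_square (k : nat) : Prop := exists a : nat, k = a * a.

(* Main.v *)
From Stdlib Require ZArith Reals Lia Lra Psatz ClassicalEpsilon Classical.
Module PellZ.
From Stdlib Require Import ZArith Reals Lia Lra Psatz ClassicalEpsilon Classical.
Local Open Scope Z_scope.

Lemma php (K : nat) : forall (g : nat -> nat), (forall n, (n <= K)%nat -> (g n < K)%nat) ->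
  exists i j, (i < j <= K)%nat /\ g i = g j.
Proof.
induction K as [|K IH]; intros g Hg.
- specialize (Hg 0%nat (le_n 0)); lia.
- set (c := g (S K)).
  destruct (classic (exists i, (i <= K)%nat /\ g i = c)) as [[i [Hi Hc]]|Hno].
  + exists i, (S K). split; [lia|exact Hc].
  + assert (Hc : (c < S K)%nat) by (apply Hg; lia).
    destruct (IH (fun n => if Nat.eq_dec (g n) K then c else g n)) as [i [j [Hij Heq]]].
    * intros n Hn. destruct (Nat.eq_dec (g n) K) as [e|e].
      -- assert (c <> K). { intro E. apply Hno. exists n. split; [lia|]. lia. } lia.
      -- specialize (Hg n ltac:(lia)). lia.
    * exists i, j. split; [lia|].
      destruct (Nat.eq_dec (g i) K) as [e1|e1]; destruct (Nat.eq_dec (g j) K) as [e2|e2].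
      -- lia.
      -- exfalso; apply Hno; exists j; split; [lia|]; auto.
      -- exfalso; apply Hno; exists i; split; [lia|]; auto.
      -- exact Heq.
Qed.

Lemma decode (M a1 b1 a2 b2 : Z) : 0 <= b1 < M -> 0 <= b2 < M -> a1*M + b1 = a2*M + b2 ->
  a1 = a2 /\ b1 = b2.
Proof.
intros H1 H2 E.
assert (a1 = a2).
{ destruct (Z.lt_trichotomy a1 a2) as [h|[h|h]]; auto.
  - assert ((a2 - a1) * M >= M) by nia. nia.
  - assert ((a1 - a2) * M >= M) by nia. nia. }
subst; lia.
Qed.

Local Open Scope R_scope.
Lemma zsqrt_R (m : Z) : (0 <= m)%Z ->
  IZR (Z.sqrt m) <= sqrt (IZR m) < IZR (Z.sqrt m) + 1.
Proof.
intros Hm. destruct (Z.sqrt_spec m Hm) as [H1 H2].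
assert (Hs := Z.sqrt_nonneg m).
set (s := Z.sqrt m) in *.
assert (Hs' : 0 <= IZR s) by (apply IZR_le; lia).
split.
- rewrite <- (sqrt_square (IZR s)) by lra.
  apply sqrt_le_1_alt. rewrite <- mult_IZR. apply IZR_le. lia.
- replace (IZR s + 1) with (sqrt ((IZR s + 1) * (IZR s + 1))) by (apply sqrt_square; lra).
  apply sqrt_lt_1_alt. split; [apply IZR_le; lia|].
  replace ((IZR s + 1) * (IZR s + 1)) with (IZR (Z.succ s * Z.succ s)).
  + apply IZR_lt; lia.
  + rewrite mult_IZR, succ_IZR; ring.
Qed.
Section Pell.
Variable k : Z.
Hypothesis hk : (2 <= k)%Z.
Hypothesis hns : forall p q : Z, (1 <= q)%Z -> (p*p <> k*(q*q))%Z.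

Let r := sqrt (IZR k).

Lemma r_pos : 0 < r.
Proof. unfold r. apply sqrt_lt_R0. apply IZR_lt. lia. Qed.

Lemma rr : r * r = IZR k.
Proof. unfold r. apply sqrt_sqrt. apply IZR_le. lia. Qed.

Lemma sqrt_kqq (q : Z) : (0 <= q)%Z -> sqrt (IZR (k*q*q)) = IZR q * r.
Proof.
intros Hq. assert (0 <= IZR q) by (apply IZR_le; lia).
rewrite <- Z.mul_assoc, mult_IZR, sqrt_mult.
- rewrite mult_IZR, sqrt_square by lra. unfold r; ring.
- apply IZR_le; lia.
- apply IZR_le; nia.
Qed.

Lemma floor_q (q : Z) : (0 <= q)%Z ->
  IZR (Z.sqrt (k*q*q)) <= IZR q * r < IZR (Z.sqrt (k*q*q)) + 1.
Proof.
intros Hq. rewrite <- sqrt_kqq by auto. apply zsqrt_R. nia.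
Qed.

Lemma dirichlet (Q : Z) : (1 <= Q)%Z -> exists p q, (1 <= q <= Q)%Z /\
   Rabs (IZR p - IZR q * r) < / IZR Q.
Proof.
intros HQ.
set (a := fun q => Z.sqrt (k*q*q)).
set (j := fun q => (a (Q*q)%Z - Q * a q)%Z).
assert (Hj : forall q, (0 <= q)%Z -> (0 <= j q < Q)%Z).
{ intros q Hq. destruct (floor_q q Hq) as [A1 A2].
  destruct (floor_q (Q*q)%Z ltac:(nia)) as [B1 B2].
  fold (a q) in A1, A2. fold (a (Q*q)%Z) in B1, B2.
  rewrite mult_IZR in B1, B2.
  assert (HQ' : 1 <= IZR Q) by (apply IZR_le; lia).
  unfold j. split.
  - assert (IZR (Q * a q)%Z < IZR (a (Q*q)%Z + 1)%Z).
    { rewrite mult_IZR, plus_IZR. nra. }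
    apply lt_IZR in H. lia.
  - assert (IZR (a (Q*q)%Z) < IZR (Q * a q + Q)%Z).
    { rewrite plus_IZR, mult_IZR. nra. }
    apply lt_IZR in H. lia. }
destruct (php (Z.to_nat Q) (fun n => Z.to_nat (j (Z.of_nat n)))) as [n1 [n2 [Hn E]]].
{ intros n Hn. destruct (Hj (Z.of_nat n) ltac:(lia)). lia. }
assert (E' : j (Z.of_nat n1) = j (Z.of_nat n2)).
{ destruct (Hj (Z.of_nat n1) ltac:(lia)). destruct (Hj (Z.of_nat n2) ltac:(lia)). lia. }
set (q1 := Z.of_nat n1) in *. set (q2 := Z.of_nat n2) in *.
exists (a q2 - a q1)%Z, (q2 - q1)%Z. split; [lia|].
destruct (floor_q (Q*q1)%Z ltac:(lia)) as [B1 B2].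
destruct (floor_q (Q*q2)%Z ltac:(lia)) as [C1 C2].
fold (a (Q*q1)%Z) in B1, B2. fold (a (Q*q2)%Z) in C1, C2.
unfold j in E'.
assert (Ea : IZR (a (Q*q2)%Z) - IZR (a (Q*q1)%Z) = IZR Q * (IZR (a q2) - IZR (a q1))).
{ rewrite <- !minus_IZR, <- mult_IZR. f_equal. lia. }
rewrite !mult_IZR in B1, B2, C1, C2.
rewrite !minus_IZR.
assert (HQ' : 1 <= IZR Q) by (apply IZR_le; lia).
set (d := IZR (a q2) - IZR (a q1) - (IZR q2 - IZR q1) * r).
assert (D : -1 < IZR Q * d < 1) by (unfold d; nra).
assert (iQ : IZR Q * / IZR Q = 1) by (field; lra).
assert (iQp : 0 < / IZR Q) by (apply Rinv_0_lt_compat; lra).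
apply Rabs_def1; nra.
Qed.

Let B := (2 * Z.sqrt k + 2)%Z.
Definition good (x : Z*Z) := (1 <= snd x)%Z /\ (Z.abs (fst x * fst x - k * (snd x * snd x)) <= B)%Z.
Definition dl (x : Z*Z) := Rabs (IZR (fst x) - IZR (snd x) * r).

Lemma dir_good (Q : Z) : (1 <= Q)%Z -> exists x, good x /\ dl x < / IZR Q.
Proof.
intros HQ. destruct (dirichlet Q HQ) as [p [q [Hq D]]].
exists (p, q). unfold good, dl; simpl. split; [|exact D]. split; [lia|].
assert (HQ' : 1 <= IZR Q) by (apply IZR_le; lia).
assert (Hq' : 1 <= IZR q <= IZR Q) by (split; apply IZR_le; lia).
assert (iQ : IZR Q * / IZR Q = 1) by (field; lra).
assert (iQp : 0 < / IZR Q) by (apply Rinv_0_lt_compat; lra).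
destruct (zsqrt_R k ltac:(lia)) as [S1 S2]. fold r in S1, S2.
assert (rp := r_pos).
set (d := IZR p - IZR q * r) in *.
assert (EN : IZR (p*p - k*(q*q)) = d * (d + 2 * IZR q * r)).
{ rewrite minus_IZR, !mult_IZR, <- rr. unfold d. ring. }
assert (Hd : Rabs d < 1) by (apply Rlt_le_trans with (/ IZR Q); auto; rewrite <- Rinv_1; apply Rinv_le_contravar; lra).
assert (Hqd : IZR q * Rabs d <= 1).
{ apply Rle_trans with (IZR Q * / IZR Q); [|lra]. apply Rmult_le_compat; try lra. apply Rabs_pos. }
assert (Habs : Rabs (IZR (p*p - k*(q*q))) < IZR (2 * Z.sqrt k + 3)).
{ rewrite EN, Rabs_mult. 
  assert (Rabs (d + 2 * IZR q * r) <= Rabs d + 2 * IZR q * r).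
  { eapply Rle_trans; [apply Rabs_triang|]. rewrite (Rabs_right (2 * IZR q * r)); [lra|nra]. }
  assert (0 <= Rabs d) by apply Rabs_pos.
  rewrite plus_IZR, mult_IZR.
  apply Rle_lt_trans with (Rabs d * (Rabs d + 2 * IZR q * r)).
  - apply Rmult_le_compat_l; auto.
  - nra. }
rewrite <- abs_IZR in Habs. apply lt_IZR in Habs. unfold B. lia.
Qed.

Lemma dl_pos x : good x -> 0 < dl x.
Proof.
intros [H1 H2]. unfold dl.
destruct (Rle_lt_or_eq_dec 0 (Rabs (IZR (fst x) - IZR (snd x) * r))) as [h|h]; [apply Rabs_pos|auto|].
exfalso. apply (hns (fst x) (snd x) H1).
symmetry in h. assert (h0 : IZR (fst x) - IZR (snd x) * r = 0) by (destruct (Req_dec (IZR (fst x) - IZR (snd x) * r) 0) as [e|e]; [exact e| exfalso; apply (Rabs_no_R0 _ e); lra]).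
apply eq_IZR. rewrite !mult_IZR, <- rr.
assert (IZR (fst x) = IZR (snd x) * r) by lra. rewrite H. ring.
Qed.

Lemma step x : good x -> exists y, good y /\ dl y < dl x.
Proof.
intros Hx. assert (P := dl_pos x Hx).
destruct (archimed (/ dl x)) as [U1 _].
set (Q := Z.max 1 (up (/ dl x))).
assert (HQ : (1 <= Q)%Z) by lia.
assert (HQ2 : / dl x <= IZR Q).
{ apply Rle_trans with (IZR (up (/ dl x))); [lra|apply IZR_le; lia]. }
destruct (dir_good Q HQ) as [y [Hy Dy]]. exists y. split; auto.
apply Rlt_le_trans with (/ IZR Q); auto.
rewrite <- (Rinv_inv (dl x)). apply Rinv_le_contravar; auto.
apply Rinv_0_lt_compat; auto.
Qed.

Lemma pell : exists u v, (u*u - k*(v*v) = 1)%Z /\ v <> 0%Z.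
Proof.
destruct (dir_good 1 ltac:(lia)) as [x0 [Hx0 _]].
set (next := fun x => epsilon (inhabits (0%Z,0%Z)) (fun y => good y /\ dl y < dl x)).
set (s := fun n => Nat.iter n next x0).
assert (Hs : forall n, good (s n) /\ dl (s (S n)) < dl (s n)).
{ induction n as [|n IH].
  - simpl. assert (E := epsilon_spec (inhabits (0%Z,0%Z)) (fun y => good y /\ dl y < dl x0) (step x0 Hx0)).
    exact (conj Hx0 (proj2 E)).
  - destruct IH as [IH1 _].
    assert (E := epsilon_spec (inhabits (0%Z,0%Z)) (fun y => good y /\ dl y < dl (s n)) (step _ IH1)).
    fold (next (s n)) in E. change (s (S n)) with (next (s n)).
    split; [exact (proj1 E)|].
    destruct (step _ (proj1 E)) as [z Hz].
    assert (E2 := epsilon_spec (inhabits (0%Z,0%Z)) (fun y => good y /\ dl y < dl (next (s n))) (ex_intro _ z Hz)).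
    exact (proj2 E2). }
assert (Hdec : forall i j, (i < j)%nat -> dl (s j) < dl (s i)).
{ intros i j Hij. induction Hij.
  - apply (proj2 (Hs i)).
  - apply Rlt_trans with (dl (s m)); auto. apply (proj2 (Hs m)). }
set (box := fun x : Z*Z => let N := (fst x * fst x - k * (snd x * snd x))%Z in
   (((N + B) * B + fst x mod Z.abs N) * B + snd x mod Z.abs N)%Z).
assert (HB : (2 <= B)%Z) by (unfold B; assert (0 <= Z.sqrt k)%Z by apply Z.sqrt_nonneg; lia).
assert (Nnz : forall x, good x -> (fst x * fst x - k * (snd x * snd x))%Z <> 0%Z).
{ intros x [h _] E. apply (hns (fst x) (snd x) h). lia. }
assert (Hbox : forall x, good x -> (0 <= box x < (2*B+1)*B*B)%Z).
{ intros x Hx. assert (h := Nnz x Hx). destruct Hx as [_ Hx]. unfold box.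
  set (N := (fst x * fst x - k * (snd x * snd x))%Z) in *.
  assert (h1 := Z.mod_pos_bound (fst x) (Z.abs N) ltac:(lia)).
  assert (h2 := Z.mod_pos_bound (snd x) (Z.abs N) ltac:(lia)).
  set (m1 := fst x mod Z.abs N) in *. set (m2 := snd x mod Z.abs N) in *.
  assert (T1 : (0 <= (N+B)*B <= (2*B)*B)%Z) by (split; [apply Z.mul_nonneg_nonneg|apply Z.mul_le_mono_nonneg_r]; lia).
  set (t := ((N + B) * B + m1)%Z).
  assert (T2 : (0 <= t <= (2*B+1)*B - 1)%Z) by (unfold t; lia).
  assert (T3 : (0 <= t*B <= ((2*B+1)*B - 1)*B)%Z) by (split; [apply Z.mul_nonneg_nonneg|apply Z.mul_le_mono_nonneg_r]; lia).
  lia. }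
destruct (php (Z.to_nat ((2*B+1)*B*B)) (fun n => Z.to_nat (box (s n)))) as [i [j [Hij E]]].
{ intros n _. destruct (Hbox (s n) (proj1 (Hs n))). lia. }
assert (Gi := proj1 (Hs i)). assert (Gj := proj1 (Hs j)).
assert (Ne : s i <> s j). { intro h. assert (dl (s j) < dl (s i)) by (apply Hdec; lia). rewrite h in H. lra. }
assert (E' : box (s i) = box (s j)).
{ destruct (Hbox _ Gi). destruct (Hbox _ Gj). lia. }
destruct (s i) as [p1 q1]. destruct (s j) as [p2 q2].
unfold box in E'; simpl in E'.
assert (N1 := Nnz _ Gi). assert (N2 := Nnz _ Gj). simpl in N1, N2.
destruct Gi as [Gi1 Gi2]; destruct Gj as [Gj1 Gj2]; simpl in *.
set (N := (p1 * p1 - k * (q1 * q1))%Z) in *.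
set (N' := (p2 * p2 - k * (q2 * q2))%Z) in *.
assert (m1 := Z.mod_pos_bound p1 (Z.abs N) ltac:(lia)).
assert (m2 := Z.mod_pos_bound q1 (Z.abs N) ltac:(lia)).
assert (m3 := Z.mod_pos_bound p2 (Z.abs N') ltac:(lia)).
assert (m4 := Z.mod_pos_bound q2 (Z.abs N') ltac:(lia)).
apply decode in E'; [|lia|lia]. destruct E' as [E' Eq].
apply decode in E'; [|lia|lia]. destruct E' as [E' Ep].
assert (EN : N' = N) by lia. rewrite EN in *.
set (n := Z.abs N) in *.
assert (Dp := Z.div_mod p1 n ltac:(lia)). assert (Dp2 := Z.div_mod p2 n ltac:(lia)).
assert (Dq := Z.div_mod q1 n ltac:(lia)). assert (Dq2 := Z.div_mod q2 n ltac:(lia)).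
set (A := (p2 / n - p1 / n)%Z). set (C := (q2 / n - q1 / n)%Z).
assert (P2 : p2 = (p1 + n * A)%Z) by (unfold A; lia).
assert (Q2 : q2 = (q1 + n * C)%Z) by (unfold C; lia).
assert (Hn : N = n \/ N = (- n)%Z) by (unfold n; lia).
assert (Hid : exists e, N = (e * n)%Z /\ (e * e = 1)%Z) by (destruct Hn as [h|h]; [exists 1%Z|exists (-1)%Z]; split; lia).
destruct Hid as [e [He1 He2]].
exists (e + p1 * A - k * q1 * C)%Z, (A * q1 - p1 * C)%Z.
assert (nn : n <> 0%Z) by lia.
split.
- assert (Brah : ((p1*p2 - k*q1*q2)*(p1*p2 - k*q1*q2) - k*((p2*q1 - p1*q2)*(p2*q1 - p1*q2)) = N * N')%Z)
    by (unfold N, N'; ring).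
  rewrite EN in Brah.
  set (u' := (e + p1 * A - k * q1 * C)%Z). set (v' := (A * q1 - p1 * C)%Z).
  assert (U : (p1*p2 - k*q1*q2 = n * u')%Z).
  { transitivity (N + n*(p1*A - k*q1*C))%Z; [rewrite P2, Q2; unfold N; ring|].
    rewrite He1. unfold u'. ring. }
  assert (V : (p2*q1 - p1*q2 = n * v')%Z) by (rewrite P2, Q2; unfold v'; ring).
  rewrite U, V, He1 in Brah.
  assert (W : ((n*n) * (u'*u' - k*(v'*v')) = (n*n) * 1)%Z).
  { transitivity ((n*u')*(n*u') - k*((n*v')*(n*v')))%Z; [ring|]. rewrite Brah.
    transitivity ((e*e)*(n*n))%Z; [ring|]. rewrite He2. ring. }
  apply Z.mul_cancel_l in W; auto. apply Z.neq_mul_0; auto.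
- intro V0. apply Ne.
  assert (V : (p1*q2 = p2*q1)%Z).
  { assert (V' : (p2*q1 - p1*q2 = n*(A*q1 - p1*C))%Z) by (rewrite P2, Q2; ring).
    rewrite V0, Z.mul_0_r in V'. lia. }
  assert (Hq : (N * (q1*q1) = N * (q2*q2))%Z).
  { transitivity ((p1*q2)*(p1*q2) - k*(q1*q1)*(q2*q2))%Z.
    - rewrite V. transitivity ((q1*q1)*N')%Z; [rewrite EN; ring|unfold N'; ring].
    - unfold N; ring. }
  assert (Hq2 : (q1*q1 = q2*q2)%Z) by (apply (Z.mul_cancel_l _ _ N); auto).
  assert (Eq1 : q1 = q2).
  { destruct (Z.lt_trichotomy q1 q2) as [h|[h|h]]; auto.
    - assert (q1*q1 < q2*q2)%Z by (apply Z.mul_lt_mono_nonneg; lia). lia.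
    - assert (q2*q2 < q1*q1)%Z by (apply Z.mul_lt_mono_nonneg; lia). lia. }
  rewrite <- Eq1 in V. assert (Ep1 : p1 = p2) by (apply (Z.mul_cancel_r _ _ q1); lia). rewrite Ep1, Eq1. reflexivity.
Qed.

Lemma pell_large (n : nat) : exists u v, (u*u - k*(v*v) = 1 /\ 1 <= u /\ Z.of_nat n <= v /\ 1 <= v)%Z.
Proof.
induction n as [|n IH].
- destruct pell as [u [v [E N]]]. exists (Z.abs u), (Z.abs v).
  assert (Z.abs u * Z.abs u = u*u)%Z by (rewrite <- Z.abs_mul; apply Z.abs_eq; nia).
  assert (Z.abs v * Z.abs v = v*v)%Z by (rewrite <- Z.abs_mul; apply Z.abs_eq; nia).
  assert (1 <= Z.abs v)%Z by lia.
  assert (Z.abs u <> 0)%Z. { intro h. assert (u = 0)%Z by lia. subst u. nia. }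
  lia.
- destruct IH as [u [v [E [H1 [H2 H3]]]]].
  exists (u*u + k*(v*v))%Z, (2*u*v)%Z.
  assert (v <= u*v)%Z by nia.
  split; [|lia].
  transitivity ((u*u - k*(v*v))*(u*u - k*(v*v)))%Z; [ring|rewrite E; ring].
Qed.

Lemma symZ (xi t : Z) : (0 <= xi)%Z -> (0 <= t)%Z -> (xi*(xi+1) = k*(t*(t+1)))%Z ->
  exists xi' t', (0 <= xi')%Z /\ (0 <= t')%Z /\ (xi'*(xi'+1) = k*(t'*(t'+1)))%Z /\
     exists c, (xi + xi' + 1 = k * c)%Z.
Proof.
intros H1 H2 E.
destruct (pell_large (Z.to_nat (2*xi+1))) as [u [v [P [U1 [V1 V2]]]]].
rewrite Z2Nat.id in V1 by lia.
set (x := (2*xi+1)%Z). set (y := (2*t+1)%Z).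
assert (Exy : (x*x - k*(y*y) = 1 - k)%Z) by (unfold x, y; lia).
set (UU := (1 + 2*k*(v*v))%Z). set (VV := (2*u*v)%Z).
assert (PP : (UU*UU - k*(VV*VV) = 1)%Z).
{ transitivity ((u*u - k*(v*v))*(u*u - k*(v*v)))%Z; [|rewrite P; ring].
  unfold UU, VV. replace (1 + 2*k*(v*v))%Z with ((u*u - k*(v*v)) + 2*k*(v*v))%Z by (rewrite P; ring). ring. }
set (m := (k*u*v*(2*t+1) - xi - k*(v*v)*(2*xi+1))%Z).
set (xi' := (m - 1)%Z).
set (t' := (t + k*(v*v)*(2*t+1) - u*v*(2*xi+1))%Z).
assert (X' : (2*xi'+1 = k*VV*y - UU*x)%Z) by (unfold xi', m, VV, UU, x, y; ring).
assert (Y' : (2*t'+1 = UU*y - VV*x)%Z) by (unfold t', VV, UU, x, y; ring).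
assert (Hx : (1 <= x)%Z) by lia. assert (Hy : (1 <= y)%Z) by lia.
assert (HV : (x <= VV)%Z).
{ assert (v <= u*v)%Z by (rewrite <- (Z.mul_1_l v) at 1; apply Z.mul_le_mono_nonneg_r; lia). unfold VV; lia. }
assert (HU : (1 <= UU)%Z).
{ assert (0 <= k*(v*v))%Z by (apply Z.mul_nonneg_nonneg; [lia|apply Z.square_nonneg]). unfold UU; lia. }
assert (Pos1 : (UU*x < k*VV*y)%Z).
{ assert (S : ((k*VV*y)*(k*VV*y) - (UU*x)*(UU*x) = k*(VV*VV)*(k-1) - x*x)%Z).
  { transitivity ((k*(VV*VV))*(k*(y*y)) - (UU*UU)*(x*x))%Z; [ring|].
    replace (k*(y*y))%Z with (x*x - 1 + k)%Z by lia.
    replace (UU*UU)%Z with (1 + k*(VV*VV))%Z by lia. ring. }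
  assert (x*x <= VV*VV)%Z by (apply Z.mul_le_mono_nonneg; lia).
  assert (k*(VV*VV)*(k-1) >= 2*(VV*VV))%Z.
  { assert (0 <= VV*VV)%Z by apply Z.square_nonneg.
    assert (0 <= k*(k-1) - 2)%Z.
    { assert (2*1 <= k*(k-1))%Z by (apply Z.mul_le_mono_nonneg; lia). lia. }
    assert (0 <= (VV*VV)*(k*(k-1) - 2))%Z by (apply Z.mul_nonneg_nonneg; lia).
    assert (k*(VV*VV)*(k-1) - 2*(VV*VV) = (VV*VV)*(k*(k-1) - 2))%Z by ring. lia. }
  destruct (Z.lt_ge_cases (UU*x) (k*VV*y)) as [h|h]; auto.
  assert ((k*VV*y)*(k*VV*y) <= (UU*x)*(UU*x))%Z.
  { apply Z.mul_le_mono_nonneg; try lia; apply Z.mul_nonneg_nonneg; try lia; apply Z.mul_nonneg_nonneg; lia. }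
  lia. }
assert (Pos2 : (VV*x < UU*y)%Z).
{ assert (S : ((UU*y)*(UU*y) - (VV*x)*(VV*x) = y*y + (VV*VV)*(k-1))%Z).
  { transitivity ((UU*UU)*(y*y) - (VV*VV)*(x*x))%Z; [ring|].
    replace (x*x)%Z with (k*(y*y) + 1 - k)%Z by lia.
    replace (UU*UU)%Z with (1 + k*(VV*VV))%Z by lia. ring. }
  assert (0 <= (VV*VV)*(k-1))%Z by (apply Z.mul_nonneg_nonneg; [apply Z.square_nonneg|lia]).
  assert (1*1 <= y*y)%Z by (apply Z.mul_le_mono_nonneg; lia).
  destruct (Z.lt_ge_cases (VV*x) (UU*y)) as [h|h]; auto.
  assert ((UU*y)*(UU*y) <= (VV*x)*(VV*x))%Z.
  { apply Z.mul_le_mono_nonneg; try lia; apply Z.mul_nonneg_nonneg; lia. }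
  lia. }
exists xi', t'. split; [lia|]. split; [lia|]. split.
- assert (N2 : ((2*xi'+1)*(2*xi'+1) - k*((2*t'+1)*(2*t'+1)) = 1 - k)%Z).
  { rewrite X', Y'. rewrite <- Exy.
    transitivity ((UU*UU - k*(VV*VV))*(x*x - k*(y*y)))%Z; [ring|rewrite PP; ring]. }
  clearbody xi' t'. clear - N2.
  assert (A1 : ((2*xi'+1)*(2*xi'+1) = 4*(xi'*(xi'+1)) + 1)%Z) by ring.
  assert (A2 : (k*((2*t'+1)*(2*t'+1)) = 4*(k*(t'*(t'+1))) + k)%Z) by ring.
  rewrite A1, A2 in N2. lia.
- exists (u*v*(2*t+1) - (v*v)*(2*xi+1))%Z. unfold xi', m. ring.
Qed.
End Pell.

Lemma symN (k : nat) : (2 <= k)%nat -> (forall p q : nat, (1 <= q)%nat -> (p*p <> k*(q*q))%nat) ->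
  forall xi t : nat, (xi*(xi+1) = k*(t*(t+1)))%nat ->
  exists xi' t' c : nat, (xi'*(xi'+1) = k*(t'*(t'+1)))%nat /\ (xi + xi' + 1 = k*c)%nat.
Proof.
intros hk hns xi t E.
assert (hkZ : (2 <= Z.of_nat k)%Z) by lia.
assert (hnsZ : forall p q : Z, (1 <= q)%Z -> (p*p <> Z.of_nat k*(q*q))%Z).
{ intros p q hq Ep. apply (hns (Z.abs_nat p) (Z.to_nat q)); [lia|].
  apply Nat2Z.inj. rewrite !Nat2Z.inj_mul, Zabs2Nat.id_abs, Z2Nat.id by lia.
  rewrite <- Z.abs_mul, Ep. apply Z.abs_eq. apply Z.mul_nonneg_nonneg; [lia|apply Z.square_nonneg]. }
assert (EZ : (Z.of_nat xi * (Z.of_nat xi + 1) = Z.of_nat k * (Z.of_nat t * (Z.of_nat t + 1)))%Z).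
{ apply (f_equal Z.of_nat) in E. rewrite !Nat2Z.inj_mul, !Nat2Z.inj_add in E. exact E. }
destruct (symZ (Z.of_nat k) hkZ hnsZ (Z.of_nat xi) (Z.of_nat t) ltac:(lia) ltac:(lia) EZ)
  as [x' [t' [H1 [H2 [H3 [c Hc]]]]]].
assert (Hc0 : (0 <= c)%Z).
{ destruct (Z.lt_ge_cases c 0) as [h|h]; auto.
  assert (Z.of_nat k * c <= Z.of_nat k * (-1))%Z by (apply Z.mul_le_mono_nonneg_l; lia). lia. }
exists (Z.to_nat x'), (Z.to_nat t'), (Z.to_nat c). split.
- apply Nat2Z.inj. rewrite !Nat2Z.inj_mul, !Nat2Z.inj_add, !Z2Nat.id by lia. exact H3.
- apply Nat2Z.inj. rewrite !Nat2Z.inj_mul, !Nat2Z.inj_add, !Z2Nat.id by lia. lia.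
Qed.

End PellZ.

Require Import Defs.
From mathcomp Require Import all_boot all_order.
From mathcomp Require Import boolp.
From mathcomp Require Import zify.

Lemma tri2 m : tri m * 2 = m * m.+1.
Proof.
rewrite /tri divnK //. by rewrite dvdn2 oddM /= andbN.
Qed.

Lemma solE k xi : sol_index k xi <-> exists t, xi * xi.+1 = k * (t * t.+1).
Proof.
split => [[t Ht]|[t Ht]]; exists t.
- by rewrite -!tri2 Ht mulnA.
- apply/eqP; rewrite -(eqn_pmul2r (isT : 0 < 2)) tri2 -mulnA tri2; exact/eqP.
Qed.

Lemma nsq k p q : 0 < q -> p * p = k * (q * q) -> is_square k.
Proof.
move=> q0 E.
set g := gcdn p q.
have g0 : 0 < g by rewrite gcdn_gt0 q0 orbT.
have [Hp Hq] : p = (p %/ g) * g /\ q = (q %/ g) * g by rewrite !divnK ?dvdn_gcdl ?dvdn_gcdr.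
set p' := p %/ g in Hp; set q' := q %/ g in Hq.
have cop : coprime p' q'.
{ have H : gcdn p' q' * g = 1 * g by rewrite muln_gcdl -Hp -Hq mul1n.
  by rewrite /coprime; move/eqP: H; rewrite eqn_pmul2r. }
have E' : p' * p' = k * (q' * q').
{ have gg : 0 < g * g by rewrite muln_gt0 g0.
  apply/eqP; rewrite -(eqn_pmul2r gg); apply/eqP.
  have -> : p' * p' * (g * g) = p * p by rewrite [in RHS]Hp mulnACA.
  by rewrite E [in LHS]Hq mulnACA mulnA. }
have dv : q' * q' %| p' * p' by rewrite E' dvdn_mull.
have cop2 : coprime (q' * q') (p' * p') by rewrite coprimeMl !coprimeMr coprime_sym cop.
have q1 : q' * q' = 1 by move: cop2; rewrite /coprime (gcdn_idPl dv) => /eqP.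
exists p'. by rewrite E' q1 muln1.
Qed.

Lemma sym_sol k (hk : 2 <= k) (hns : ~ is_square k) xi :
  sol_index k xi -> exists xi', sol_index k xi' /\ k %| xi + xi' + 1.
Proof.
move=> /solE [t E].
have E' : xi * (xi + 1) = k * (t * (t + 1)) by rewrite !addn1.
have hk' : (2 <= k)%coq_nat by apply/leP.
have hns' : forall p q : nat, (1 <= q)%coq_nat -> p * p <> k * (q * q).
{ move=> p q /leP hq Ep; apply: hns; exact: (nsq _ _ _ hq Ep). }
have [xi' [t' [c [E1 E2]]]] := PellZ.symN _ hk' hns' _ _ E'.
exists xi'; split.
- apply/solE; exists t'. change (xi' * (xi' + 1) = k * (t' * (t' + 1))) in E1. by rewrite !addn1 in E1.
- apply/dvdnP; exists c. rewrite mulnC. exact: E2.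
Qed.

Lemma memRk k (r : 'I_k) : (r \in Rk k) <-> exists xi, sol_index k xi /\ xi %% k = r.
Proof. by rewrite inE; split => [/asboolP|H]; [|apply/asboolP]. Qed.

Lemma symR k (hk : 2 <= k) (hns : ~ is_square k) (mu : 'I_k) :
  mu \in Rk k -> rev_ord mu \in Rk k.
Proof.
move=> /memRk [xi [Hs Hm]].
have [xi' [Hs' dv]] := sym_sol _ hk hns _ Hs.
apply/memRk; exists xi'; split => //=.
have r1 := ltn_pmod xi' (ltnW hk).
have r0 := ltn_ord mu.
set r' := xi' %% k in r1 *.
have Hd : xi + xi' + 1 = (xi %/ k + xi' %/ k) * k + (mu + r' + 1).
{ rewrite {1}(divn_eq xi k) {1}(divn_eq xi' k) Hm. rewrite /r'. lia. }
move: dv; rewrite Hd dvdn_addr; last by rewrite dvdn_mull.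
case/dvdnP => m Hm'.
have : m = 1 by nia.
move=> m1; rewrite m1 mul1n in Hm'. lia.
Qed.

Lemma nofix k (hk : 2 <= k) (mu : 'I_k) : mu \in Rk k -> 2 * mu + 1 != k.
Proof.
move=> /memRk [xi [/solE [t E] Hm]].
apply/negP => /eqP Hk.
have h1 : 2 * xi + 1 = (2 * (xi %/ k) + 1) * k.
{ rewrite {1}(divn_eq xi k) Hm. nia. }
have h2 : (2 * xi + 1) * (2 * xi + 1) = 4 * (k * (t * t.+1)) + 1.
{ rewrite -E. nia. }
have : k %| 4 * (k * (t * t.+1)) + 1.
{ by rewrite -h2 h1 dvdn_mulr // dvdn_mull. }
rewrite dvdn_addr; last by apply: dvdn_mull; apply: dvdn_mulr.
rewrite dvdn1 => /eqP k1. by rewrite k1 in hk.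
Qed.

Theorem proposition1 (k : nat) (hk : 2 <= k) (hns : ~ is_square k) :
  [/\ (exists r : 'I_k, r \in Rk k /\ nat_of_ord r = 0)
      /\ (exists r : 'I_k, r \in Rk k /\ nat_of_ord r = k - 1),
      (forall mu : 'I_k, mu \in Rk k ->
         exists nu : 'I_k, nu \in Rk k /\ nat_of_ord nu = k - 1 - mu),
      ~~ odd #|Rk k|
    & (\sum_(mu in Rk k) nat_of_ord mu) * 2 = (k - 1) * #|Rk k| ].
Proof.
have k0 : 0 < k by apply: ltnW.
set R := Rk k.
have z0 : (Ordinal k0 : 'I_k) \in R.
{ apply/memRk; exists 0; split; last by rewrite mod0n.
  by exists 0; rewrite /tri mul0n div0n muln0. }
have revR : forall i : 'I_k, (rev_ord i \in R) = (i \in R).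
{ move=> i; apply/idP/idP => H; last exact: (symR _ hk hns).
  by rewrite -(rev_ordK i); apply: (symR _ hk hns). }
have Hsum : \sum_(mu in R) nat_of_ord mu = \sum_(mu in R) nat_of_ord (rev_ord mu).
{ rewrite (reindex_inj rev_ord_inj) /=. apply: eq_bigl => i. by rewrite revR. }
split.
- split; first by exists (Ordinal k0).
  exists (rev_ord (Ordinal k0)); split; first exact: (symR _ hk hns).
  rewrite /=. lia.
- move=> mu Hmu; exists (rev_ord mu); split; first exact: (symR _ hk hns).
  rewrite /=. lia.
- have Hc : #|R| = \sum_(i in R) (2 * i < k - 1) + \sum_(i in R) (k - 1 < 2 * i).
  { rewrite -big_split /= -sum1_card. apply: eq_bigr => i Hi.
    have /eqP ne := nofix _ hk _ Hi.
    by case: (ltnP (2*i) (k-1)) => h1; case: (ltnP (k-1) (2*i)) => h2 /=; lia. }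
  have H2 : \sum_(i in R) (k - 1 < 2 * i) = \sum_(i in R) (2 * i < k - 1).
  { rewrite (reindex_inj rev_ord_inj) /=. 
    rewrite (eq_bigl (fun i => i \in R)); last by move=> i; rewrite revR.
    apply: eq_bigr => i _. have := ltn_ord i. rewrite /=.
    have -> : (k - 1 < 2 * (k - i.+1)) = (2 * i < k - 1) by apply/idP/idP; lia.
    by []. }
  by rewrite Hc H2 addnn odd_double.
- have -> : (\sum_(mu in R) nat_of_ord mu) * 2 = \sum_(mu in R) (nat_of_ord mu + nat_of_ord (rev_ord mu)).
  { by rewrite big_split /= -Hsum muln2 addnn. }
  rewrite (eq_bigr (fun=> k - 1)); last by move=> i _; rewrite /=; have := ltn_ord i; lia.
  by rewrite sum_nat_const mulnC.
Qed.
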